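(* Let $A\in\mathbb{R}^{n\times d}$, $b\in\mathbb{R}^n$, and suppose $Ax=b$ admits a solution $x^*$. Let $\lbrace W_1,\ldots,W_N\rbrace\subset\mathbb{R}^n$ and let $w$ be a random variable with $\mathbb{P}[w=W_j]>0$ for $j=1,\ldots,N$ and $\sum_j\mathbb{P}[w=W_j]=1$. Let $\lbrace w_\ell:\ell\geq0\rbrace$ be sampled from $\lbrace W_1,\ldots,W_N\rbrace$ without replacement, the set being repopulated with its original elements once exhausted and sampling without replacement repeated. Let $\mathcal{N}(w) = \mathrm{span}\lbrace z\in\mathbb{R}^d:\mathbb{P}[z'A'w=0]=1\rbrace$, $\mathcal{R}(w) = \mathcal{N}(w)^\perp$; let $x_0\in\mathbb{R}^d$ be arbitrary and $x_{k+1} = x_k + A'w_kw_k'(b-Ax_k)/\|A'w_k\|_2^2$. Define $\tau_0=0$, $\tau_1=\min\lbrace k\geq0:\mathrm{span}\lbrace A'w_0,\ldots,A'w_k\rbrace=\mathcal{R}(w)\rbrace$, and for $\ell\geq2$, $\tau_\ell=\min\lbrace k>\tau_{\ell-1}:\mathrm{span}\lbrace A'w_{\tau_{\ell-1}+1},\ldots,A'w_k\rbrace=\mathcal{R}(w)\rbrace$ if $\tau_{\ell-1}<\infty$, else $\infty$; let $\mathcal{F}_\ell$ be the set of matrices whose columns form a maximal linearly independent subset of $\lbrace A'w_{\tau_{\ell-1}+1}/\|A'w_{\tau_{\ell-1}+1}\|_2,\ldots,A'w_{\tau_\ell}/\|A'w_{\tau_\ell}\|_2\rbrace$ and $\gamma_\ell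 = 1-\min_{F\in\mathcal{F}_\ell}\det(F'F)$. Then (1) $\tau_\ell - \tau_{\ell-1}\leq 2N$ for all $\ell\in\mathbb{N}$, and (2) $\lim_{\ell\to\infty}\prod_{j=1}^\ell\gamma_j = 0$. Moreover, the $\gamma_j$ are uniformly bounded by some $\gamma\in[0,1)$ that depends on $\lbrace A'W_1,\ldots,A'W_N\rbrace$, and therefore, with probability one, $$\|x_{2N\ell} - x^* - P_{\mathcal{N}(w)}(x_0-x^* )\|_2^2 \leq \gamma^\ell\|P_{\mathcal{R}(w)}(x_0-x^* )\|_2^2.$$
   Context: $P_W$ is orthogonal projection onto $W$; $A'$ is the transpose. The iteration presupposes $A'w_k\neq0$. *)

(* Defs.v *)
From HB Require Import structures.
From mathcomp Require Import all_boot all_order all_algebra.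
From mathcomp Require Import all_classical all_reals all_analysis.
Set Implicit Arguments. Unset Strict Implicit. Unset Printing Implicit Defensive.
Import Order.TTheory GRing.Theory Num.Theory.
Local Open Scope ring_scope.
Local Open Scope classical_set_scope.

Definition sqnorm (R : realType) (m : nat) (v : 'cV[R]_m) : R :=
  \sum_(i < m) v i 0 ^+ 2.
Definition norm2 (R : realType) (m : nat) (v : 'cV[R]_m) : R :=
  Num.sqrt (sqnorm v).

Definition spanset (R : realType) (d : nat) (S : set 'cV[R]_d) : set 'cV[R]_d :=
  [set x | forall M : 'M[R]_d, (forall z, S z -> (z^T <= M)%MS) -> (x^T <= M)%MS].

Definition orthcompl (R : realType) (d : nat) (S : set 'cV[R]_d) : set 'cV[R]_d :=
  [set y | forall z, S z -> y^T *m z = 0].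

Definition is_orth_proj (R : realType) (d : nat) (S : set 'cV[R]_d)
  (v u : 'cV[R]_d) : Prop :=
  S u /\ forall z, S z -> (v - u)^T *m z = 0.

(* The random variable w takes value W j with probability p j.
   P[z'A'w = 0] : *)
Definition prob_zero (R : realType) (n d N : nat) (A : 'M[R]_(n, d))
  (W : 'I_N -> 'cV[R]_n) (p : 'I_N -> R) (z : 'cV[R]_d) : R :=
  \sum_(j < N | z^T *m A^T *m W j == 0) p j.

Definition Nw (R : realType) (n d N : nat) (A : 'M[R]_(n, d))
  (W : 'I_N -> 'cV[R]_n) (p : 'I_N -> R) : set 'cV[R]_d :=
  spanset [set z | prob_zero A W p z = 1].
Definition Rw (R : realType) (n d N : nat) (A : 'M[R]_(n, d))
  (W : 'I_N -> 'cV[R]_n) (p : 'I_N -> R) : set 'cV[R]_d :=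
  orthcompl (Nw A W p).

(* The sample sequence is w_k = W (s k). *)
Definition spanOK (R : realType) (n d N : nat) (A : 'M[R]_(n, d))
  (W : 'I_N -> 'cV[R]_n) (p : 'I_N -> R) (s : nat -> 'I_N) (s0 k : nat) : Prop :=
  forall y : 'cV[R]_d,
    (y^T <= (\sum_(s0 <= i < k.+1) <<(A^T *m W (s i))^T>>)%MS)%MS <-> Rw A W p y.

Lemma ex_asbool (P : nat -> Prop) : (exists k, P k) -> exists k, `[< P k >].
Proof. by move=> [k hk]; exists k; apply/asboolP. Qed.

(* least k with P k, or None (= infinity) if there is none *)
Definition first_hit (P : nat -> Prop) : option nat :=
  match pselect (exists k, P k) with
  | left h => Some (ex_minn (ex_asbool h))
  | right _ => None
  end.

Fixpoint tau (R : realType) (n d N : nat) (A : 'M[R]_(n, d))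
  (W : 'I_N -> 'cV[R]_n) (p : 'I_N -> R) (s : nat -> 'I_N) (l : nat)
  : option nat :=
  match l with
  | 0 => Some 0%N
  | l'.+1 =>
    match l' with
    | 0 => first_hit (fun k => spanOK A W p s 0 k)
    | _ => obind (fun t => first_hit (fun k => (t < k)%N /\ spanOK A W p s t.+1 k))
                 (tau A W p s l')
    end
  end.

Definition blockvec (R : realType) (n d N : nat) (A : 'M[R]_(n, d))
  (W : 'I_N -> 'cV[R]_n) (s : nat -> 'I_N) (s0 t : nat) (y : 'cV[R]_d) : Prop :=
  exists i, (s0 <= i <= t)%N /\
    y = (norm2 (A^T *m W (s i)))^-1 *: (A^T *m W (s i)).

Definition maxindep (R : realType) (n d N : nat) (A : 'M[R]_(n, d))
  (W : 'I_N -> 'cV[R]_n) (s : nat -> 'I_N) (s0 t : nat) (r : nat)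
  (F : 'M[R]_(d, r)) : Prop :=
  [/\ forall j, blockvec A W s s0 t (col j F),
      \rank F = r &
      forall y, blockvec A W s s0 t y -> (\rank (row_mx F y) < r.+1)%N].

Definition detset (R : realType) (n d N : nat) (A : 'M[R]_(n, d))
  (W : 'I_N -> 'cV[R]_n) (s : nat -> 'I_N) (s0 t : nat) : set R :=
  [set x | exists r (F : 'M[R]_(d, r)), maxindep A W s s0 t F /\ x = \det (F^T *m F)].

(* gamma_l = 1 - min_{F in F_l} det(F'F); block l is indices
   tau_{l-1}+1 .. tau_l for l >= 2 and 0 .. tau_1 for l = 1.
   (Value 1 when some tau is infinite: never used, see (1).) *)
Definition gamma (R : realType) (n d N : nat) (A : 'M[R]_(n, d))
  (W : 'I_N -> 'cV[R]_n) (p : 'I_N -> R) (s : nat -> 'I_N) (l : nat) : R :=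
  match tau A W p s l.-1, tau A W p s l with
  | Some t, Some t' => 1 - inf (detset A W s (if l == 1%N then 0%N else t.+1) t')
  | _, _ => 1
  end.

Fixpoint kacz (R : realType) (n d N : nat) (A : 'M[R]_(n, d)) (b : 'cV[R]_n)
  (W : 'I_N -> 'cV[R]_n) (s : nat -> 'I_N) (x0 : 'cV[R]_d) (k : nat)
  : 'cV[R]_d :=
  match k with
  | 0 => x0
  | k'.+1 =>
    let x := kacz A b W s x0 k' in
    let a := A^T *m W (s k') in
    x + (((W (s k'))^T *m (b - A *m x)) 0 0 / sqnorm a) *: a
  end.

(* Main.v *)
Require Import Defs.
From HB Require Import structures.
From mathcomp Require Import all_boot all_order all_algebra.
From mathcomp Require Import all_classical all_reals all_analysis.
Import Order.TTheory GRing.Theory Num.Theory.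
Import numFieldNormedType.Exports.
Local Open Scope ring_scope.
Local Open Scope classical_set_scope.
From mathcomp Require Import ring lra zify.
Set Implicit Arguments. Unset Strict Implicit. Unset Printing Implicit Defensive.

Lemma CS (R : realFieldType) (I : finType) (u v : I -> R) :
  (\sum_i u i * v i)^+2 <= (\sum_i u i ^+2) * (\sum_i v i ^+2).
Proof.
have e : forall i j, (u i * v j - u j * v i)^+2 =
   u i^+2 * v j^+2 + u j^+2 * v i^+2 - 2 * ((u i * v i) * (u j * v j)).
  by move=> i j; ring.
have H : 0 <= \sum_i \sum_j (u i * v j - u j * v i)^+2.
  by apply: sumr_ge0 => i _; apply: sumr_ge0 => j _; apply: sqr_ge0.
set a := \sum_i u i ^+ 2; set b := \sum_i v i ^+ 2; set c := \sum_i u i * v i.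
have H2 : \sum_i \sum_j (u i * v j - u j * v i)^+2 = 2 * (a * b - c^+2).
  under eq_bigr => i _ do (under eq_bigr => j _ do rewrite e; rewrite sumrB big_split /= -mulr_sumr -mulr_suml -mulr_sumr -mulr_sumr).
  rewrite sumrB big_split /= -mulr_suml -mulr_sumr -mulr_sumr -mulr_suml.
  rewrite -/a -/b -/c. ring.
by rewrite H2 pmulr_rge0 // subr_ge0 in H.
Qed.

Definition dot (R : comPzRingType) (d : nat) (u v : 'cV[R]_d) : R := (u^T *m v) 0 0.

Lemma dotE (R : comPzRingType) d (u v : 'cV[R]_d) : dot u v = \sum_k u k 0 * v k 0.
Proof. by rewrite /dot mxE; apply: eq_bigr => k _; rewrite mxE. Qed.

Lemma dotC (R : comPzRingType) d (u v : 'cV[R]_d) : dot u v = dot v u.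
Proof. by rewrite !dotE; apply: eq_bigr => k _; rewrite mulrC. Qed.

Lemma dotDr (R : comPzRingType) d (u v w : 'cV[R]_d) : dot u (v + w) = dot u v + dot u w.
Proof. by rewrite !dotE -big_split; apply: eq_bigr => k _; rewrite mxE mulrDr. Qed.

Lemma dotBr (R : comPzRingType) d (u v w : 'cV[R]_d) : dot u (v - w) = dot u v - dot u w.
Proof. by rewrite !dotE -sumrB; apply: eq_bigr => k _; rewrite !mxE mulrBr. Qed.

Lemma dotZr (R : comPzRingType) d (u v : 'cV[R]_d) c : dot u (c *: v) = c * dot u v.
Proof. by rewrite !dotE mulr_sumr; apply: eq_bigr => k _; rewrite mxE mulrCA. Qed.

Lemma dotDl (R : comPzRingType) d (u v w : 'cV[R]_d) : dot (v + w) u = dot v u + dot w u.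
Proof. by rewrite dotC dotDr !(dotC u). Qed.

Lemma dotBl (R : comPzRingType) d (u v w : 'cV[R]_d) : dot (v - w) u = dot v u - dot w u.
Proof. by rewrite dotC dotBr !(dotC u). Qed.

Lemma dotZl (R : comPzRingType) d (u v : 'cV[R]_d) c : dot (c *: v) u = c * dot v u.
Proof. by rewrite dotC dotZr dotC. Qed.

Lemma dot0r (R : comPzRingType) d (u : 'cV[R]_d) : dot u 0 = 0.
Proof. by rewrite dotE big1 // => k _; rewrite mxE mulr0. Qed.

Lemma sqnormE (R : realType) d (v : 'cV[R]_d) : sqnorm v = dot v v.
Proof. by rewrite /sqnorm dotE; apply: eq_bigr => k _; rewrite expr2. Qed.

Lemma dot_ge0 (R : realFieldType) d (v : 'cV[R]_d) : 0 <= dot v v.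
Proof. by rewrite dotE; apply: sumr_ge0 => k _; rewrite -expr2 sqr_ge0. Qed.

Lemma dot_eq0 (R : realFieldType) d (v : 'cV[R]_d) : (dot v v == 0) = (v == 0).
Proof.
apply/idP/idP; last by move/eqP->; rewrite dot0r.
rewrite dotE psumr_eq0 => [H|k _]; last by rewrite -expr2 sqr_ge0.
apply/eqP/matrixP => i j; rewrite ord1 mxE.
by move/allP: H => /(_ i (mem_index_enum _)); rewrite -expr2 sqrf_eq0 => /eqP.
Qed.

Lemma dotCS (R : realFieldType) d (u v : 'cV[R]_d) : dot u v ^+ 2 <= dot u u * dot v v.
Proof.
rewrite !dotE; apply: le_trans (CS _ _) _.
by rewrite le_eqVlt; apply/orP; left; apply/eqP; congr (_ * _); apply: eq_bigr => k _; rewrite expr2.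
Qed.

Lemma mx11_eq0 (R : comPzRingType) (M : 'M[R]_1) : (M == 0) = (M 0 0 == 0).
Proof.
apply/idP/idP => [/eqP->|/eqP H]; first by rewrite mxE.
by apply/eqP/matrixP => i j; rewrite !ord1 H mxE.
Qed.

Definition Bt (R : realType) n d N (A : 'M[R]_(n, d)) (W : 'I_N -> 'cV[R]_n) : 'M[R]_(N, d) :=
  \matrix_(j, k) (A^T *m W j) k 0.

Lemma row_Bt (R : realType) n d N (A : 'M[R]_(n, d)) (W : 'I_N -> 'cV[R]_n) j :
  row j (Bt A W) = (A^T *m W j)^T.
Proof. by apply/matrixP => i k; rewrite ord1 /Bt !mxE. Qed.

Lemma Bt_mul (R : realType) n d N (A : 'M[R]_(n, d)) (W : 'I_N -> 'cV[R]_n) (z : 'cV[R]_d) j :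
  (Bt A W *m z) j 0 = dot z (A^T *m W j).
Proof. by rewrite dotC dotE mxE; apply: eq_bigr => k _; rewrite /Bt !mxE. Qed.

Lemma Bt_mul0 (R : realType) n d N (A : 'M[R]_(n, d)) (W : 'I_N -> 'cV[R]_n) (z : 'cV[R]_d) :
  (Bt A W *m z = 0) <-> (forall j, dot z (A^T *m W j) = 0).
Proof.
split => [H j|H]; first by rewrite -Bt_mul H mxE.
by apply/matrixP => j i; rewrite ord1 Bt_mul H mxE.
Qed.

Lemma prob_zero1 (R : realType) n d N (A : 'M[R]_(n, d)) (W : 'I_N -> 'cV[R]_n) p
  (hp : forall j, 0 < p j) (hs : \sum_(j < N) p j = 1) z :
  prob_zero A W p z = 1 <-> forall j, dot z (A^T *m W j) = 0.
Proof.
have E : forall j, (z^T *m A^T *m W j == 0) = (dot z (A^T *m W j) == 0).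
  by move=> j; rewrite -mulmxA mx11_eq0.
rewrite /prob_zero; split => [H j|H]; last first.
  by rewrite -hs; apply: eq_bigl => j; rewrite E H eqxx.
apply/eqP; rewrite -E; apply/negP => /negP Hj.
have H1 : \sum_(j < N) p j = \sum_(i < N | z^T *m A^T *m W i == 0) p i
    + \sum_(i < N | z^T *m A^T *m W i != 0) p i := bigID _ _ _.
have H0 : \sum_(i < N | z^T *m A^T *m W i != 0) p i = 0.
  move: H1; rewrite hs H; lra.
have : 0 < \sum_(i < N | z^T *m A^T *m W i != 0) p i.
  rewrite (bigD1 j) //=; apply: ltr_pwDl; first exact: hp.
  by apply: sumr_ge0 => i _; apply: ltW.
by rewrite H0 ltxx.
Qed.

Lemma Nw_orth (R : realType) n d N (A : 'M[R]_(n, d)) (W : 'I_N -> 'cV[R]_n) p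
  (hp : forall j, 0 < p j) (hs : \sum_(j < N) p j = 1) z :
  Nw A W p z -> forall j, dot z (A^T *m W j) = 0.
Proof.
move=> Hz.
have : (z^T <= kermx (Bt A W)^T)%MS.
  apply: Hz => z' /(prob_zero1 A W hp hs) H; apply/sub_kermxP.
  rewrite -trmx_mul; apply/eqP; rewrite -(trmx0) (inj_eq trmx_inj); apply/eqP.
  by apply/Bt_mul0.
move/sub_kermxP => H; apply/Bt_mul0; move: H.
by rewrite -trmx_mul => /(congr1 trmx); rewrite trmxK trmx0.
Qed.

Lemma ker_Nw (R : realType) n d N (A : 'M[R]_(n, d)) (W : 'I_N -> 'cV[R]_n) p
  (hp : forall j, 0 < p j) (hs : \sum_(j < N) p j = 1) z :
  (forall j, dot z (A^T *m W j) = 0) -> Nw A W p z.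
Proof. by move=> H M HM; apply: HM; apply/(prob_zero1 A W hp hs). Qed.

Lemma Rw_iff (R : realType) n d N (A : 'M[R]_(n, d)) (W : 'I_N -> 'cV[R]_n) p
  (hp : forall j, 0 < p j) (hs : \sum_(j < N) p j = 1) y :
  Rw A W p y <-> (y^T <= Bt A W)%MS.
Proof.
split => [Hy|/submxP [D HD] z Hz]; last first.
  rewrite HD.
  rewrite -mulmxA; have -> : Bt A W *m z = 0. apply/Bt_mul0. exact: (Nw_orth hp hs Hz).
  by rewrite mulmx0.
rewrite submxE; apply/eqP/matrixP => i k; rewrite ord1 [RHS]mxE.
set C := cokermx (Bt A W).
have HC : Bt A W *m col k C = 0.
  apply/matrixP => j i'; rewrite ord1.
  transitivity ((Bt A W *m C) j k); first by rewrite !mxE; apply: eq_bigr => l _; rewrite !mxE.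
  by rewrite mulmx_coker !mxE.
have Hn : Nw A W p (col k C).
  apply: (ker_Nw hp hs) => j; rewrite -Bt_mul HC mxE //.
transitivity ((y^T *m col k C) 0 0); first by rewrite !mxE; apply: eq_bigr => l _; rewrite !mxE.
by rewrite Hy // mxE.
Qed.

Lemma a_Rw (R : realType) n d N (A : 'M[R]_(n, d)) (W : 'I_N -> 'cV[R]_n) p
  (hp : forall j, 0 < p j) (hs : \sum_(j < N) p j = 1) j :
  Rw A W p (A^T *m W j).
Proof. by apply/(Rw_iff A W hp hs); rewrite -row_Bt row_sub. Qed.

Lemma Rw_Nw_dot (R : realType) n d N (A : 'M[R]_(n, d)) (W : 'I_N -> 'cV[R]_n) p y z :
  Rw A W p y -> Nw A W p z -> dot y z = 0.
Proof. by move=> Hy Hz; rewrite /dot Hy // mxE. Qed.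

Lemma rank_row_mx_le (F : fieldType) m n1 n2 (A : 'M[F]_(m, n1)) (B : 'M[F]_(m, n2)) :
  (\rank (row_mx A B) <= \rank A + \rank B)%N.
Proof.
rewrite -mxrank_tr tr_row_mx -addsmxE -(mxrank_tr A) -(mxrank_tr B).
by case: (mxrank_adds_leqif (A^T) (B^T)).
Qed.

Lemma dot_pyth (R : realFieldType) d (g h : 'cV[R]_d) :
  dot g h = 0 -> dot g g <= dot (g + h) (g + h).
Proof.
move=> o; rewrite dotDl !dotDr o (dotC h g) o addr0 add0r lerDl; exact: dot_ge0.
Qed.

Lemma gram_det (R : realFieldType) d r (F : 'M[R]_(d, r)) :
  \rank F = r -> (forall j, dot (col j F) (col j F) <= 1) ->
  0 < \det (F^T *m F) <= 1.
Proof.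
elim: r F => [|r IH] F hr hc; first by rewrite det_mx00 ltr01 lexx.
pose F' : 'M[R]_(d, 1 + r) := F.
pose f : 'cV[R]_d := lsubmx F'.
pose F1 : 'M[R]_(d, r) := rsubmx F'.
have HF : F' = row_mx f F1 by rewrite hsubmxK.
have hr1 : \rank F1 = r.
  apply/eqP; rewrite eqn_leq rank_leq_col /=.
  have := rank_row_mx_le f F1; rewrite -HF /F' hr.
  have := rank_leq_col f; lia.
have hc1 : forall j, dot (col j F1) (col j F1) <= 1.
  move=> j; have -> : col j F1 = col (rshift 1 j) F.
    by apply/matrixP => i k; rewrite !mxE.
  exact: hc.
have hf : dot f f <= 1.
  have -> : f = col ord0 F.
    apply/matrixP => i k; rewrite !mxE ord1; congr (F i _); exact: val_inj.
  exact: hc.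
have /andP [G1pos G1le] := IH F1 hr1 hc1.
set G1 := F1^T *m F1 in G1pos G1le.
have G1u : G1 \in unitmx by rewrite unitmxE unitfE gt_eqF.
pose c := invmx G1 *m (F1^T *m f).
pose g := f - F1 *m c.
have Hg : F1^T *m g = 0.
  by rewrite /g mulmxBr /c mulmxA -/G1 mulmxA mulmxV // mul1mx subrr.
pose E : 'M[R]_(1 + r) := block_mx 1%:M 0 (- c) 1%:M.
have HE : F' *m E = row_mx g F1.
  rewrite HF /E mul_row_block !mulmx1 !mulmx0 add0r mulmxN.
  by [].
have dE : \det E = 1 by rewrite /E det_lblock !det1 mulr1.
have HG : \det (F^T *m F) = dot g g * \det G1.
  have -> : \det (F^T *m F) = \det ((F' *m E)^T *m (F' *m E)).
    by rewrite trmx_mul -mulmxA (mulmxA (F'^T)) det_mulmx det_tr dE mul1r det_mulmx dE mulr1.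
  rewrite HE tr_row_mx mul_col_row.
  have -> : g^T *m F1 = 0 by rewrite -(trmxK F1) -trmx_mul Hg trmx0.
  rewrite Hg det_ublock det_mx11 //.
have fg : f = g + F1 *m c by rewrite /g subrK.
have Hgf : dot g g <= dot f f.
  have o : dot g (F1 *m c) = 0.
    by rewrite /dot mulmxA -(trmxK F1) -trmx_mul Hg trmx0 mul0mx mxE.
  have := dot_pyth o; rewrite -fg //.
have gnz : g != 0.
  apply/negP => /eqP g0.
  have : F' = F1 *m row_mx c 1%:M by rewrite HF fg g0 add0r mul_mx_row mulmx1.
  move=> /(congr1 (fun M => \rank M)); rewrite /F' hr => H.
  have := mxrankM_maxl F1 (row_mx c 1%:M); rewrite -H hr1; lia.
have gpos : 0 < dot g g by rewrite lt_def dot_eq0 gnz dot_ge0.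
rewrite HG; apply/andP; split; first exact: mulr_gt0.
rewrite -(mulr1 1); apply: ler_pM => //; [exact: dot_ge0|exact: ltW|exact: le_trans hf].
Qed.

Definition vhat (R : realType) n d N (A : 'M[R]_(n, d)) (W : 'I_N -> 'cV[R]_n) j : 'cV[R]_d :=
  (norm2 (A^T *m W j))^-1 *: (A^T *m W j).

Lemma vhat_unit (R : realType) n d N (A : 'M[R]_(n, d)) (W : 'I_N -> 'cV[R]_n) j :
  A^T *m W j != 0 -> dot (vhat A W j) (vhat A W j) = 1.
Proof.
move=> H; rewrite /vhat dotZl dotZr /norm2 sqnormE.
set s := dot _ _.
have sp : 0 < s by rewrite lt_def dot_eq0 H dot_ge0.
rewrite mulrA -expr2 exprVn sqr_sqrtr ?ltW // mulVf // gt_eqF //.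
Qed.

Definition Fm (R : realType) n d N (A : 'M[R]_(n, d)) (W : 'I_N -> 'cV[R]_n) r (f : 'I_r -> 'I_N)
  : 'M[R]_(d, r) := \matrix_(i, k) vhat A W (f k) i 0.

Definition cmin (R : realType) n d N (A : 'M[R]_(n, d)) (W : 'I_N -> 'cV[R]_n) : R :=
  \big[Order.min/1]_(r < d.+1) \big[Order.min/1]_(f : {ffun 'I_r -> 'I_N})
     (let x := \det ((Fm A W f)^T *m Fm A W f) in if 0 < x then x else 1).

Lemma cmin_pos (R : realType) n d N (A : 'M[R]_(n, d)) (W : 'I_N -> 'cV[R]_n) :
  0 < cmin A W.
Proof.
rewrite /cmin; apply: (big_ind (fun x => 0 < x)) => //; first by move=> x y; rewrite lt_min => ->.
move=> r _; apply: (big_ind (fun x => 0 < x)) => //; first by move=> x y; rewrite lt_min => ->.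
by move=> f _ /=; case: ifP.
Qed.

Lemma detset_lb (R : realType) n d N (A : 'M[R]_(n, d)) (W : 'I_N -> 'cV[R]_n)
  (hAW : forall j, A^T *m W j != 0) s s0 t x :
  detset A W s s0 t x -> cmin A W <= x /\ x <= 1.
Proof.
move=> [r [F [[hcol hrk hmax] ->]]].
have [f0 hf0] : exists f0 : 'I_r -> 'I_N, forall j, col j F = vhat A W (f0 j).
  apply: (@fin_all_exists _ (fun _ => 'I_N) (fun j i => col j F = vhat A W i)) => j.
  have [i [_ ->]] := hcol j.
  by exists (s i).
have HF : F = Fm A W f0.
  apply/matrixP => i k; rewrite /Fm mxE -hf0 mxE //.
have hu : forall j, dot (col j F) (col j F) <= 1.
  by move=> j; rewrite hf0 vhat_unit.
have /andP [dpos dle] := gram_det hrk hu.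
split => //.
have hrd : (r < d.+1)%N by rewrite ltnS -{1}hrk rank_leq_row.
rewrite /cmin; apply: le_trans (bigmin_le _ (Ordinal hrd) _) _ => /=.
apply: le_trans (bigmin_le _ [ffun k => f0 k] _) _ => /=.
have -> : Fm A W [ffun k => f0 k] = F.
  by rewrite HF; apply/matrixP => i k; rewrite /Fm !mxE ffunE.
by rewrite dpos.
Qed.

Lemma detset_ne (R : realType) n d N (A : 'M[R]_(n, d)) (W : 'I_N -> 'cV[R]_n)
  s s0 t : exists x, detset A W s s0 t x.
Proof.
pose m := (t.+1 - s0)%N.
pose X : 'M[R]_(m, d) := \matrix_(i < m, k < d) vhat A W (s (s0 + i)%N) k 0.
pose ff := maxrankfun X.
pose Fr : 'M[R]_(\rank X, d) := rowsub ff X.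
exists (\det (Fr^T^T *m Fr^T)), (\rank X), (Fr^T); split => //.
split.
- move=> j; exists (s0 + ff j)%N; split.
    by have := ltn_ord (ff j); rewrite /m; lia.
  apply/matrixP => i k; rewrite ord1 !mxE. reflexivity.
- by rewrite mxrank_tr (eq_maxrowsub X).
- move=> y [i [hi ->]].
  rewrite -mxrank_tr tr_row_mx trmxK ltnS.
  have him : (i - s0 < m)%N by rewrite /m; lia.
  have -> : (norm2 (A^T *m W (s i)))^-1 *: (A^T *m W (s i)) = vhat A W (s i) by [].
  apply: mxrankS; rewrite col_mx_sub; apply/andP; split.
    by rewrite /Fr (eq_maxrowsub X).
  have -> : (vhat A W (s i))^T = row (Ordinal him) X.
    apply/matrixP => a k; rewrite ord1 !mxE /=.
    by have -> : (s0 + (i - s0) = i)%N by lia.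
  exact: row_sub.
Qed.

Lemma inf_detset (R : realType) n d N (A : 'M[R]_(n, d)) (W : 'I_N -> 'cV[R]_n)
  (hAW : forall j, A^T *m W j != 0) s s0 t :
  cmin A W <= inf (detset A W s s0 t) <= 1.
Proof.
have [x0 hx0] := detset_ne A W s s0 t.
have lb : lbound (detset A W s s0 t) (cmin A W).
  by move=> x hx; case: (detset_lb hAW hx).
apply/andP; split.
  by apply: lb_le_inf => //; exists x0.
apply: le_trans (_ : x0 <= 1); last by case: (detset_lb hAW hx0).
by apply: ge_inf => //; exists (cmin A W).
Qed.

Lemma first_hitP (P : nat -> Prop) k : P k ->
  exists m, first_hit P = Some m /\ P m /\ (m <= k)%N.
Proof.
move=> Pk; rewrite /first_hit; case: pselect => [h|nh]; last by exfalso; apply: nh; exists k.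
case: ex_minnP => m /asboolP Pm minm; exists m; split => //; split => //.
by apply: minm; apply/asboolP.
Qed.

Lemma spanOK_cover (R : realType) n d N (A : 'M[R]_(n, d)) (W : 'I_N -> 'cV[R]_n) p
  (hp : forall j, 0 < p j) (hs : \sum_(j < N) p j = 1) (s : nat -> 'I_N) s0 k :
  (forall j, exists i, (s0 <= i <= k)%N /\ s i = j) -> spanOK A W p s s0 k.
Proof.
move=> hcov y; rewrite (Rw_iff A W hp hs).
set S := (\sum_(s0 <= i < k.+1) <<(A^T *m W (s i))^T>>)%MS.
have S1 : (S <= Bt A W)%MS.
  rewrite /S; apply: (big_ind (fun (X : 'M[R]_d) => (X <= Bt A W)%MS)).
  - exact: sub0mx.
  - by move=> X Y hX hY; rewrite addsmx_sub hX hY.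
  - by move=> i _; rewrite genmxE -row_Bt row_sub.
have S2 : (Bt A W <= S)%MS.
  apply/row_subP => j; rewrite row_Bt.
  have [i [hi <-]] := hcov j.
  rewrite /S (bigD1_seq i) /=; last exact: iota_uniq.
    by apply: submx_trans (addsmxSl _ _); rewrite genmxE.
  by rewrite mem_index_iota; lia.
split => H; first exact: submx_trans H S1.
exact: submx_trans H S2.
Qed.


Lemma cover (N : nat) (s : nat -> 'I_N)
  (hinj : forall e : nat, injective (fun i : 'I_N => s (e * N + i)%N)) e j :
  exists i0 : 'I_N, s (e * N + i0)%N = j.
Proof. by exists (invF (hinj e) j); rewrite (f_invF (hinj e) j). Qed.

Lemma tau_fin (R : realType) n d N (A : 'M[R]_(n, d)) (W : 'I_N -> 'cV[R]_n) p
  (hp : forall j, 0 < p j) (hs : \sum_(j < N) p j = 1) (s : nat -> 'I_N)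
  (hinj : forall e : nat, injective (fun i : 'I_N => s (e * N + i)%N)) l :
  exists t t', [/\ tau A W p s l = Some t, tau A W p s l.+1 = Some t' & (t' - t <= 2 * N)%N].
Proof.
have N0 : (0 < N)%N by case: (s 0%N) => i; lia.
elim: l => [|l [t [t' [_ ht' _]]]].
  have H : spanOK A W p s 0 N.-1.
    apply: (spanOK_cover A W hp hs) => j; have [i0 hi0] := cover hinj 0 j.
    exists i0; rewrite mul0n add0n in hi0; split => //.
    by have := ltn_ord i0; lia.
  have [m [hm [_ hmle]]] := first_hitP H.
  exists 0%N, m; split => //; lia.
pose e := (t' %/ N).+1.
have ht : (t' = t' %/ N * N + t' %% N)%N := divn_eq t' N.
have hr : (t' %% N < N)%N := ltn_pmod t' N0.
have he : (e * N = t' %/ N * N + N)%N by rewrite /e mulSn addnC.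
have H : (t' < e * N + N.-1)%N /\ spanOK A W p s t'.+1 (e * N + N.-1).
  split; first by lia.
  apply: (spanOK_cover A W hp hs) => j; have [i0 hi0] := cover hinj e j.
  exists (e * N + i0)%N; split => //; have := ltn_ord i0; lia.
have [m [hm [_ hmle]]] := first_hitP (P := fun k => (t' < k)%N /\ spanOK A W p s t'.+1 k) H.
exists t', m; split => //.
  change (obind (fun t0 => first_hit (fun k => (t0 < k)%N /\ spanOK A W p s t0.+1 k)) (tau A W p s l.+1) = Some m).
  by rewrite ht' /= hm.
lia.
Qed.

Lemma proj_energy (R : realFieldType) d (g a : 'cV[R]_d) : a != 0 ->
  dot (g - (dot a g / dot a a) *: a) (g - (dot a g / dot a a) *: a)
  = dot g g - (dot a g)^+2 / dot a a.
Proof.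
move=> anz; have na : dot a a != 0 by rewrite dot_eq0.
rewrite !dotBl !dotBr !dotZl !dotZr (dotC g a).
field; exact: na.
Qed.

Lemma seq_bound (R : realFieldType) d (g bb : nat -> 'cV[R]_d)
  (hnz : forall i, bb i != 0)
  (hstep : forall i, g i.+1 = g i - (dot (bb i) (g i) / dot (bb i) (bb i)) *: bb i) :
  (forall i, dot (g i.+1) (g i.+1) = dot (g i) (g i) - (dot (bb i) (g i))^+2 / dot (bb i) (bb i))
  /\ (forall i j, (i <= j)%N -> dot (g j) (g j) <= dot (g i) (g i))
  /\ (forall (a : 'cV[R]_d) i, (dot a (g 0%N - g i))^+2 <=
        2 ^+ i.+1 * dot a a * (dot (g 0%N) (g 0%N) - dot (g i) (g i))).
Proof.
have En : forall i, dot (g i.+1) (g i.+1) = dot (g i) (g i) - (dot (bb i) (g i))^+2 / dot (bb i) (bb i).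
  by move=> i; rewrite hstep proj_energy.
have dpos : forall i, 0 < dot (bb i) (bb i) by move=> i; rewrite lt_def dot_eq0 hnz dot_ge0.
have dec : forall i, dot (g i.+1) (g i.+1) <= dot (g i) (g i).
  move=> i; rewrite En lerBlDr lerDl; apply: divr_ge0; [exact: sqr_ge0|exact: ltW].
have mono : forall i j, (i <= j)%N -> dot (g j) (g j) <= dot (g i) (g i).
  move=> i j /subnK <-; elim: (j - i)%N => [|k IH]; first by rewrite add0n.
  by rewrite addSn; apply: le_trans (dec _) IH.
split => //; split => // a; elim => [|i IH].
  by rewrite subrr dot0r expr0n /= subrr !mulr0.
set D := dot (g 0%N) (g 0%N) - dot (g i) (g i) in IH.
set t := dot (bb i) (g i) / dot (bb i) (bb i).
set del := (dot (bb i) (g i))^+2 / dot (bb i) (bb i).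
have hD : 0 <= D by rewrite /D subr_ge0 mono.
have hdel : 0 <= del by apply: divr_ge0; [exact: sqr_ge0|exact: ltW].
have hna : 0 <= dot a a by exact: dot_ge0.
have E1 : g 0%N - g i.+1 = (g 0%N - g i) + t *: bb i by rewrite hstep -/t opprD opprK addrA.
have E2 : dot (g 0%N) (g 0%N) - dot (g i.+1) (g i.+1) = D + del by rewrite En /D /del; ring.
rewrite E1 E2 dotDr dotZr.
set X := dot a (g 0%N - g i).
have hY : (t * dot a (bb i))^+2 <= dot a a * del.
  rewrite exprMn; apply: le_trans (ler_wpM2l (sqr_ge0 t) (dotCS a (bb i))) _.
  rewrite /del /t le_eqVlt; apply/orP; left; apply/eqP; field.
  by rewrite dot_eq0.
have h2 : 2 <= 2 ^+ i.+2 :> R.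
  by rewrite -[X in X <= _]expr1 ler_eXn2l // ltr1n.
have hpow : 0 <= 2 ^+ i.+1 :> R by apply: exprn_ge0.
have sq2 : forall x y : R, (x + y)^+2 <= 2 * x^+2 + 2 * y^+2.
  move=> x y; have := sqr_ge0 (x - y); nra.
apply: le_trans (sq2 _ _) _.
have e3 : 2 ^+ i.+2 = 2 * 2 ^+ i.+1 :> R by rewrite exprS.
rewrite e3.
have := ler_wpM2l (ler0n R 2) IH; have := ler_wpM2l (ler0n R 2) hY.
have : 2 * (dot a a * del) <= 2 * 2 ^+ i.+1 * (dot a a * del).
  apply: ler_wpM2r; first by apply: mulr_ge0.
  by rewrite -e3.
move=> H1 H2 H3; rewrite /X; lra.
Qed.

Lemma epoch_bound (R : realFieldType) d (g bb : nat -> 'cV[R]_d)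
  (hnz : forall i, bb i != 0)
  (hstep : forall i, g i.+1 = g i - (dot (bb i) (g i) / dot (bb i) (bb i)) *: bb i) N :
  \sum_(i < N) (dot (bb i) (g 0%N))^+2 / dot (bb i) (bb i)
   <= N%:R * 2 ^+ N.+2 * (dot (g 0%N) (g 0%N) - dot (g N) (g N)).
Proof.
have [En [mono Hb]] := seq_bound hnz hstep.
set DN := dot (g 0%N) (g 0%N) - dot (g N) (g N).
have hDN : 0 <= DN by rewrite /DN subr_ge0 mono.
have step : forall i : 'I_N, (dot (bb i) (g 0%N))^+2 / dot (bb i) (bb i) <= 2 ^+ N.+2 * DN.
  move=> [i hi] /=.
  set b := bb i.
  have nb : 0 < dot b b by rewrite lt_def dot_eq0 hnz dot_ge0.
  set Di := dot (g 0%N) (g 0%N) - dot (g i) (g i).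
  set del := (dot b (g i))^+2 / dot b b.
  have hDi : 0 <= Di by rewrite /Di subr_ge0 mono.
  have hdel : 0 <= del by apply: divr_ge0; [exact: sqr_ge0|exact: ltW].
  have hX := Hb b i; rewrite -/Di in hX.
  have eZ : (dot b (g i))^+2 = dot b b * del by rewrite /del mulrC divfK // gt_eqF.
  have e0 : dot b (g 0%N) = dot b (g 0%N - g i) + dot b (g i) by rewrite -dotDr subrK.
  have Di1 : Di + del <= DN.
    have -> : Di + del = dot (g 0%N) (g 0%N) - dot (g i.+1) (g i.+1) by rewrite En /Di /del; ring.
    by rewrite /DN lerB // mono.
  have p1 : 2 ^+ i.+2 <= 2 ^+ N.+2 :> R.
    by rewrite ler_eXn2l ?ltr1n //; lia.
  have p2 : 2 <= 2 ^+ i.+2 :> R by rewrite -[X in X <= _]expr1 ler_eXn2l // ltr1n.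
  have p0 : 0 <= 2 ^+ i.+1 :> R by apply: exprn_ge0.
  have e3 : 2 ^+ i.+2 = 2 * 2 ^+ i.+1 :> R by rewrite exprS.
  rewrite ler_pdivrMr // e0.
  set X := dot b (g 0%N - g i); set Z := dot b (g i).
  have sq2 : (X + Z)^+2 <= 2 * X^+2 + 2 * Z^+2 by have := sqr_ge0 (X - Z); nra.
  apply: le_trans sq2 _; rewrite eZ.
  have h1 : 2 * X^+2 <= 2 ^+ i.+2 * dot b b * Di.
    by rewrite e3 -!mulrA ler_wpM2l // mulrA.
  have h2 : 2 * (dot b b * del) <= 2 ^+ i.+2 * dot b b * del.
    by rewrite mulrA; apply: ler_wpM2r => //; apply: ler_wpM2r => //; exact: ltW.
  have h3 : 2 ^+ i.+2 * dot b b * (Di + del) <= 2 ^+ N.+2 * DN * dot b b.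
    rewrite mulrAC; apply: ler_wpM2r; first exact: ltW.
    apply: le_trans (ler_wpM2l _ Di1) _; first exact: exprn_ge0.
    by apply: ler_wpM2r.
  move: h1 h2 h3; rewrite /X; lra.
apply: le_trans (ler_sum _ (fun i _ => step i)) _.
by rewrite sumr_const card_ord -mulrA mulr_natl.
Qed.

Definition Kf (R : realType) n d N (A : 'M[R]_(n, d)) (W : 'I_N -> 'cV[R]_n) : R :=
  (\sum_(j < N) (\sum_(k < d) pinvmx (Bt A W) k j ^+ 2) * (dot (A^T *m W j) (A^T *m W j))^+2)
  * (\sum_(j < N) (dot (A^T *m W j) (A^T *m W j))^-1) + 1.

Lemma Kf_ge1 (R : realType) n d N (A : 'M[R]_(n, d)) (W : 'I_N -> 'cV[R]_n) :
  (forall j, A^T *m W j != 0) -> 1 <= Kf A W.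
Proof.
move=> hAW; rewrite /Kf lerDr; apply: mulr_ge0; apply: sumr_ge0 => j _.
  by apply: mulr_ge0; [apply: sumr_ge0 => k _; exact: sqr_ge0|exact: sqr_ge0].
by rewrite invr_ge0 dot_ge0.
Qed.

Lemma frame (R : realType) n d N (A : 'M[R]_(n, d)) (W : 'I_N -> 'cV[R]_n)
  (hAW : forall j, A^T *m W j != 0) (y : 'cV[R]_d) :
  (y^T <= Bt A W)%MS ->
  dot y y <= Kf A W * \sum_(j < N) (dot (A^T *m W j) y)^+2 / dot (A^T *m W j) (A^T *m W j).
Proof.
move=> hy.
set P := pinvmx (Bt A W).
pose nn j := dot (A^T *m W j) (A^T *m W j).
have nnp : forall j, 0 < nn j by move=> j; rewrite lt_def dot_eq0 hAW dot_ge0.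
pose z j := dot (A^T *m W j) y.
pose c := y^T *m P.
have hc : y^T = c *m Bt A W by rewrite /c mulmxKpV.
set S := \sum_(j < N) _.
have SE : S = \sum_j z j ^+ 2 / nn j by [].
set H := \sum_(j < N) (nn j)^-1.
set K0 := \sum_(j < N) (\sum_(k < d) P k j ^+ 2) * (nn j)^+2.
have hS : 0 <= S by rewrite SE; apply: sumr_ge0 => j _; apply: divr_ge0; [exact: sqr_ge0|exact: ltW].
have hH : forall j, (nn j)^-1 <= H.
  move=> j; rewrite /H (bigD1 j) //= lerDl; apply: sumr_ge0 => i _; rewrite invr_ge0 ltW //.
have hK0 : 0 <= K0.
  by apply: sumr_ge0 => j _; apply: mulr_ge0; [apply: sumr_ge0 => k _; exact: sqr_ge0|exact: sqr_ge0].
have hyy : dot y y = \sum_j (c 0 j * nn j) * (z j / nn j).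
  transitivity ((c *m (Bt A W *m y)) 0 0).
    by rewrite /dot hc mulmxA.
  rewrite mxE; apply: eq_bigr => j _; rewrite Bt_mul dotC /z -mulrA (mulrC (nn j)) divfK // gt_eqF //.
have hcj : forall j, (c 0 j)^+2 <= dot y y * \sum_(k < d) P k j ^+ 2.
  move=> j; rewrite /c mxE dotE.
  have := CS (fun k => y^T 0 k) (fun k => P k j).
  have -> : \sum_k (y^T 0 k)^+2 = \sum_k y k 0 * y k 0.
    by apply: eq_bigr => k _; rewrite mxE expr2.
  done.
have h1 : \sum_j (c 0 j * nn j)^+2 <= dot y y * K0.
  rewrite /K0 mulr_sumr; apply: ler_sum => j _; rewrite exprMn [X in _ <= X]mulrA.
  by apply: ler_wpM2r; [exact: sqr_ge0|exact: hcj].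
have h2 : \sum_j (z j / nn j)^+2 <= S * H.
  rewrite SE mulr_suml; apply: ler_sum => j _.
  have -> : (z j / nn j)^+2 = z j ^+2 / nn j * (nn j)^-1 by rewrite expr_div_n expr2 invfM mulrA.
  apply: ler_wpM2l; last exact: hH.
  by apply: divr_ge0; [exact: sqr_ge0|exact: ltW].
have h3 : (dot y y)^+2 <= dot y y * K0 * (S * H).
  rewrite hyy; apply: le_trans (CS _ _) _; rewrite -hyy.
  apply: ler_pM => //; try (apply: sumr_ge0 => j _; exact: sqr_ge0).
have hyy0 := dot_ge0 y.
have hKf : Kf A W = K0 * H + 1 by [].
rewrite hKf.
case: (eqVneq (dot y y) 0) => [->|ynz].
  by apply: mulr_ge0 => //; apply: addr_ge0 => //; apply: mulr_ge0 => //; apply: sumr_ge0 => j _; rewrite invr_ge0 ltW.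
have ypos : 0 < dot y y by rewrite lt_def ynz hyy0.
have h4 : dot y y <= K0 * (S * H).
  by rewrite -(ler_pM2l ypos) -expr2 mulrA.
apply: le_trans h4 _; have -> : K0 * (S * H) = K0 * H * S by ring.
by rewrite mulrDl mul1r lerDl.
Qed.

Lemma kacz_err (R : realType) n d N (A : 'M[R]_(n, d)) (W : 'I_N -> 'cV[R]_n) p
  (hp : forall j, 0 < p j) (hs : \sum_(j < N) p j = 1)
  (b : 'cV[R]_n) (xs : 'cV[R]_d) (hb : A *m xs = b) (s : nat -> 'I_N) (x0 u1 : 'cV[R]_d)
  (hu1 : Nw A W p u1) k :
  kacz A b W s x0 k.+1 - xs - u1 =
  (kacz A b W s x0 k - xs - u1)
  - (dot (A^T *m W (s k)) (kacz A b W s x0 k - xs - u1)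
     / dot (A^T *m W (s k)) (A^T *m W (s k))) *: (A^T *m W (s k)).
Proof.
rewrite /=.
set x := kacz A b W s x0 k; set a := A^T *m W (s k).
have Hau : dot a u1 = 0 by rewrite dotC; exact: (Nw_orth hp hs hu1).
have E : ((W (s k))^T *m (b - A *m x)) 0 0 = - dot a (x - xs - u1).
  rewrite -hb -mulmxBr mulmxA.
  have -> : (W (s k))^T *m A = a^T by rewrite /a trmx_mul trmxK.
  rewrite -/(dot a (xs - x)) !dotBr Hau; ring.
rewrite E sqnormE.
set c := dot a (x - xs - u1) / dot a a.
rewrite mulNr scaleNr.
apply/matrixP => i j; rewrite !mxE /c; ring.
Qed.

Lemma Rw_step (R : realType) n d N (A : 'M[R]_(n, d)) (W : 'I_N -> 'cV[R]_n) p
  (hp : forall j, 0 < p j) (hs : \sum_(j < N) p j = 1) y c j :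
  Rw A W p y -> Rw A W p (y - c *: (A^T *m W j)).
Proof.
move=> /(Rw_iff A W hp hs) hy; apply/(Rw_iff A W hp hs).
rewrite linearB linearZ /=; apply: addmx_sub => //.
by rewrite -scaleNr; apply: scalemx_sub; rewrite -row_Bt row_sub.
Qed.

Definition kapL (R : realType) n d N (A : 'M[R]_(n, d)) (W : 'I_N -> 'cV[R]_n) : R :=
  Kf A W * (N%:R * 2 ^+ N.+2 + 1).

Lemma kapL_ge1 (R : realType) n d N (A : 'M[R]_(n, d)) (W : 'I_N -> 'cV[R]_n) :
  (forall j, A^T *m W j != 0) -> 1 <= kapL A W.
Proof.
move=> hAW; rewrite /kapL.
have h1 := Kf_ge1 hAW.
have h2 : 1 <= N%:R * 2 ^+ N.+2 + 1 :> R.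
  by rewrite lerDr; apply: mulr_ge0 => //; exact: exprn_ge0.
by have := ler_pM ler01 ler01 h1 h2; rewrite mul1r.
Qed.

Lemma kacz_bound (R : realType) n d N (A : 'M[R]_(n, d)) (W : 'I_N -> 'cV[R]_n)
  (hAW : forall j, A^T *m W j != 0) p
  (hp : forall j, 0 < p j) (hs : \sum_(j < N) p j = 1)
  (b : 'cV[R]_n) (xs : 'cV[R]_d) (hb : A *m xs = b) (s : nat -> 'I_N)
  (hinj : forall e : nat, injective (fun i : 'I_N => s (e * N + i)%N))
  (x0 u1 u2 : 'cV[R]_d) :
  is_orth_proj (Nw A W p) (x0 - xs) u1 ->
  is_orth_proj (Rw A W p) (x0 - xs) u2 ->
  forall l, sqnorm (kacz A b W s x0 (2 * N * l) - xs - u1)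
            <= (1 - (kapL A W)^-1) ^+ l * sqnorm u2.
Proof.
move=> [hu1 ho1] [hu2 ho2].
pose ff k := kacz A b W s x0 k - xs - u1.
have hstep : forall k, ff k.+1 = ff k - (dot (A^T *m W (s k)) (ff k)
     / dot (A^T *m W (s k)) (A^T *m W (s k))) *: (A^T *m W (s k)).
  by move=> k; rewrite /ff (kacz_err hp hs hb).
have f0 : ff 0%N = u2.
  have hR1 : Rw A W p (x0 - xs - u1) by move=> z hz; exact: ho1.
  have hv : Rw A W p (x0 - xs - u1 - u2).
    move/(Rw_iff A W hp hs): hR1 => h1; move/(Rw_iff A W hp hs): hu2 => h2.
    by apply/(Rw_iff A W hp hs); rewrite linearB /=; apply: addmx_sub => //; rewrite -scaleN1r; apply: scalemx_sub.
  have : dot (x0 - xs - u1 - u2) (x0 - xs - u1 - u2) = 0.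
    have E : x0 - xs - u1 - u2 = (x0 - xs - u2) - u1 by rewrite addrAC.
    rewrite {2}E dotBr (Rw_Nw_dot hv hu1) subr0.
    by rewrite dotC /dot ho2 // mxE.
  move/eqP; rewrite dot_eq0 subr_eq0 => /eqP <-.
  by rewrite /ff.
have hRw : forall k, Rw A W p (ff k).
  elim => [|k IH]; first by rewrite f0.
  by rewrite hstep; apply: Rw_step.
have hnz : forall k, A^T *m W (s k) != 0 by move=> k; exact: hAW.
have [En [mono _]] := seq_bound hnz hstep.
set L := kapL A W.
have hL : 1 <= L by exact: kapL_ge1.
have Lpos : 0 < L by apply: lt_le_trans hL.
have hkap0 : 0 <= 1 - L^-1 by rewrite subr_ge0 invf_le1.
have epoch : forall e, dot (ff (e * N + N)%N) (ff (e * N + N)%N)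
                      <= (1 - L^-1) * dot (ff (e * N)%N) (ff (e * N)%N).
  move=> e; set k0 := (e * N)%N.
  pose g i := ff (k0 + i)%N; pose bb i := A^T *m W (s (k0 + i)%N).
  have hstep' : forall i, g i.+1 = g i - (dot (bb i) (g i) / dot (bb i) (bb i)) *: bb i.
    by move=> i; rewrite /g addnS hstep.
  have hnz' : forall i, bb i != 0 by move=> i; exact: hAW.
  have Heb := epoch_bound hnz' hstep' N.
  have Hfr := frame hAW ((Rw_iff A W hp hs _).1 (hRw k0)).
  rewrite (reindex_inj (hinj e)) /= in Hfr.
  rewrite /g /bb addn0 in Heb.
  set G0 := dot (ff k0) (ff k0) in Hfr Heb *.
  set GN := dot (ff (k0 + N)%N) (ff (k0 + N)%N) in Heb *.
  set S := \sum_(i < N) _ in Hfr Heb.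
  have hGN : GN <= G0 by apply: mono; lia.
  have hKf : 1 <= Kf A W by exact: Kf_ge1.
  have hc : 0 <= N%:R * 2 ^+ N.+2 :> R by apply: mulr_ge0 => //; exact: exprn_ge0.
  have H1 : G0 <= L * (G0 - GN).
    apply: le_trans Hfr _; rewrite /L /kapL -mulrA; apply: ler_wpM2l; first lra.
    apply: le_trans (Heb) _; rewrite mulrDl mul1r lerDl subr_ge0 //.
  have H2 : L * GN <= (L - 1) * G0 by lra.
  rewrite mulrBl mul1r lerBrDr -(ler_pM2l Lpos) mulrDr mulrA mulfV ?gt_eqF // mul1r.
  lra.
have nonexp : forall k m, dot (ff (k + m)%N) (ff (k + m)%N) <= dot (ff k) (ff k).
  by move=> k m; apply: mono; lia.
elim => [|l IH]; first by rewrite muln0 expr0 mul1r; move: f0; rewrite /ff => ->.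
have E2 : (2 * N * l.+1 = (2 * l) * N + N + N)%N by ring.
rewrite E2 sqnormE; apply: le_trans (nonexp _ _) _.
apply: le_trans (epoch _) _.
have E3 : (2 * l * N = 2 * N * l)%N by ring.
rewrite E3 -sqnormE exprS -mulrA; apply: ler_wpM2l => //.
Qed.

Lemma gamma_bd (R : realType) n d N (A : 'M[R]_(n, d)) (W : 'I_N -> 'cV[R]_n)
  (hAW : forall j, A^T *m W j != 0) p
  (hp : forall j, 0 < p j) (hs : \sum_(j < N) p j = 1) (s : nat -> 'I_N)
  (hinj : forall e : nat, injective (fun i : 'I_N => s (e * N + i)%N)) j :
  (1 <= j)%N -> 0 <= gamma A W p s j <= 1 - cmin A W.
Proof.
move=> hj; have [t [t' [h1 h2 _]]] := tau_fin A W hp hs hinj j.-1.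
rewrite prednK // in h2.
rewrite /gamma h1 h2.
have /andP [i1 i2] := inf_detset hAW s (if j == 1%N then 0%N else t.+1) t'.
by apply/andP; split; [rewrite subr_ge0|rewrite lerB].
Qed.

Unset Implicit Arguments.

Theorem mainTheorem14 (R : realType) (n d N : nat) (A : 'M[R]_(n, d))
  (W : 'I_N -> 'cV[R]_n) (hWinj : injective W)
  (hAW : forall j, A^T *m W j != 0) :
  exists gam : R, 0 <= gam < 1 /\
  forall (p : 'I_N -> R), (forall j, 0 < p j) -> \sum_(j < N) p j = 1 ->
  forall (b : 'cV[R]_n) (xs : 'cV[R]_d), A *m xs = b ->
  forall (s : nat -> 'I_N),
    (forall e : nat, injective (fun i : 'I_N => s (e * N + i)%N)) ->
  [/\ (forall l : nat, exists t t' : nat,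
         [/\ tau A W p s l = Some t, tau A W p s l.+1 = Some t' & (t' - t <= 2 * N)%N]),
      (fun l : nat => \prod_(1 <= j < l.+1) gamma A W p s j) @ \oo --> (0 : R),
      (forall j : nat, (1 <= j)%N -> gamma A W p s j <= gam) &
      forall (x0 u1 u2 : 'cV[R]_d) (l : nat),
        is_orth_proj (Nw A W p) (x0 - xs) u1 ->
        is_orth_proj (Rw A W p) (x0 - xs) u2 ->
        sqnorm (kacz A b W s x0 (2 * N * l) - xs - u1) <= gam ^+ l * sqnorm u2].
Proof.
set g1 := 1 - cmin A W.
set g2 := 1 - (kapL A W)^-1.
have hL := kapL_ge1 hAW.
have Lpos : 0 < kapL A W by apply: lt_le_trans hL.
have hg2 : 0 <= g2 by rewrite /g2 subr_ge0 invf_le1.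
have hg2' : g2 < 1 by rewrite /g2 ltrBlDr ltrDl invr_gt0.
have hg1' : g1 < 1 by rewrite /g1 ltrBlDr ltrDl cmin_pos.
exists (Num.max g1 g2).
have hgam0 : 0 <= Num.max g1 g2 by rewrite le_max hg2 orbT.
have hgam1 : Num.max g1 g2 < 1 by rewrite gt_max hg1' hg2'.
split; first by rewrite hgam0 hgam1.
move=> p hp hs b xs hb s hinj.
have hgam : forall j, (1 <= j)%N -> 0 <= gamma A W p s j <= Num.max g1 g2.
  move=> j hj; have /andP [a1 a2] := gamma_bd hAW hp hs hinj hj.
  by rewrite a1 /= le_max a2.
split.
- move=> l; exact: (tau_fin A W hp hs hinj l).
- have hprod : forall l, 0 <= \prod_(1 <= j < l.+1) gamma A W p s j <= Num.max g1 g2 ^+ l.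
    elim => [|l IH]; first by rewrite big_geq // expr0 ler01 lexx.
    rewrite big_nat_recr //= exprSr.
    have /andP [a1 a2] := hgam l.+1 isT.
    case/andP: IH => b1 b2.
    by rewrite mulr_ge0 //= ler_pM.
  apply: (@squeeze_cvgr _ _ _ _ (fun=> 0) (fun l => Num.max g1 g2 ^+ l)).
  + by apply: nearW => l; exact: hprod.
  + exact: cvg_cst.
  + by apply: cvg_expr; rewrite ger0_norm.
- by move=> j hj; case/andP: (hgam j hj).
- move=> x0 u1 u2 l H1 H2.
  apply: le_trans (kacz_bound hAW hp hs hb hinj H1 H2 l) _.
  apply: ler_wpM2r; first by rewrite sqnormE dot_ge0.
  by apply: lerXn2r => //; rewrite -/g2 le_max lexx orbT.
Qed.
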